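(* Let $G$ be a countable discrete amenable group, $\Lambda$ a strongly connected finite $k$-graph, and $(G,\Lambda)$ a pseudo free and locally faithful self-similar action satisfying the finite-state condition, with $x_\Lambda(g\cdot v)=x_\Lambda(v)$ for all $v\in\Lambda^0$, $g\in G$. Then $\mathrm{Per}_{G,\Lambda}$ is a subgroup of $\{n\in\mathbb{Z}^k:\rho(\Lambda)^n=1\}$; in particular $\rho(\Lambda)^{d(\mu)}=\rho(\Lambda)^{d(\nu)}$ for every cycline triple $(\mu,g,\nu)$.
   Context: Let $k\ge1$. A $k$-graph is a countable small category $\Lambda$ together with a functor $d:\Lambda\to\mathbb{N}^k$ (the degree map) with the unique factorization property: for every $\mu\in\Lambda$ and $m,n\in\mathbb{N}^k$ with $d(\mu)=m+n$ there are unique $\alpha,\beta\in\Lambda$ with $d(\alpha)=m$, $d(\beta)=n$ and $\mu=\alpha\beta$. Write $\Lambda^n=d^{-1}(n)$; $\Lambda^0$ is identified with the set of objects (vertices), and $r,s$ denote range and source. For $v,w\in\Lambda^0$ and $n\in\mathbb{N}^k$ write $v\Lambda=r^{-1}(v)$, $v\Lambda w=r^{-1}(v)\cap s^{-1}(w)$, $v\Lambda^n=v\Lambda\cap\Lambda^n$, etc. All $k$-graphs are assumed row-finite ($|v\Lambda^n|<\infty$) and source-free ($v\Lambda^n\neq\emptyset$) for all $v,n$. $\Lambda$ is finite if $|\Lambda^n|<\infty$ for all $n$, and strongly connected if $v\Lambda w\neq\emptyset$ for all $v,w\in\Lambda^0$. $e_1,\dots,e_k$ is the standard basis of $\mathbb{N}^k$.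 Infinite paths: let $\Omega_k=\{(p,q)\in\mathbb{N}^k\times\mathbb{N}^k:p\le q\}$ with $r(p,q)=(p,p)$, $s(p,q)=(q,q)$, $(p,q)(q,m)=(p,m)$, $d(p,q)=q-p$. An infinite path is a degree-preserving functor $x:\Omega_k\to\Lambda$; $\Lambda^\infty$ is the set of infinite paths, $v\Lambda^\infty=\{x:x(0,0)=v\}$, the shift is $\sigma^n(x)(p,q)=x(p+n,q+n)$, and for $\mu\in\Lambda$, $x\in s(\mu)\Lambda^\infty$, $\mu x$ is the unique infinite path $y$ with $y(0,d(\mu))=\mu$ and $\sigma^{d(\mu)}(y)=x$. Self-similar actions: $G$ is a countable discrete group. A self-similar action $(G,\Lambda)$ consists of an action of $G$ on $\Lambda$ by automorphisms (bijections preserving $d$, $r$, $s$), written $g\cdot\mu$, and a restriction map $G\times\Lambda\to G$, $(g,\mu)\mapsto g|_\mu$, such that for all $g,h\in G$, $v\in\Lambda^0$ and $\mu,\nu$ with $s(\mu)=r(\nu)$: $g\cdot(\mu\nu)=(g\cdot\mu)(g|_\mu\cdot\nu)$; $g|_v=g$; $g|_{\mu\nu}=(g|_\mu)|_\nu$; $1_G|_\mu=1_G$; $(gh)|_\mu=g|_{h\cdot\mu}\,h|_\mu$. For $x\in\Lambda^\infty$, $(g\cdot x)(p,q)=g|_{x(0,p)}\cdot x(p,q)$. The action is pseudo free if $g\cdot\mu=\mu$ and $g|_\mu=1_G$ for some $\mu\in\Lambda$ imply $g=1_G$; locally faithful if, whenever $g\in G$, $v\in\Lambda^0$ and $g\cdot\mu=\mu$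 for all $\mu\in v\Lambda$, then $g=1_G$; it satisfies the finite-state condition if $\{g|_\mu:\mu\in\Lambda\}$ is finite for each $g\in G$. Cycline triples and periodicity: a triple $(\mu,g,\nu)\in\Lambda\times G\times\Lambda$ with $s(\mu)=g\cdot s(\nu)$ is cycline if $\mu(g\cdot x)=\nu x$ for all $x\in s(\nu)\Lambda^\infty$; $\mathcal{C}_{G,\Lambda}$ is the set of cycline triples. $\mathrm{Per}_{G,\Lambda}=\{d(\mu)-d(\nu):(\mu,g,\nu)\in\mathcal{C}_{G,\Lambda}\}\subseteq\mathbb{Z}^k$. Perron–Frobenius data: for a strongly connected finite $k$-graph let $T_{e_i}(v,w)=|v\Lambda^{e_i}w|$, $\rho(\Lambda)=(\rho(T_{e_1}),\dots,\rho(T_{e_k}))$ (spectral radii, all positive), $\rho(\Lambda)^n=\prod_i\rho(T_{e_i})^{n_i}$ for $n\in\mathbb{Z}^k$. The Perron–Frobenius eigenvector $x_\Lambda$ is the unique vector in $(0,\infty)^{\Lambda^0}$ with $\sum_v x_\Lambda(v)=1$ and $T_{e_i}x_\Lambda=\rho(T_{e_i})x_\Lambda$ for all $i$. *)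

(* Defs.v *)
From HB Require Import structures.
From mathcomp Require Import all_boot all_order all_algebra all_field.
Set Implicit Arguments. Unset Strict Implicit. Unset Printing Implicit Defensive.
Import Order.TTheory GRing.Theory Num.Theory.

Definition deg_t (k : nat) := {ffun 'I_k -> nat}.
Definition zdeg_t (k : nat) := {ffun 'I_k -> int}.
Definition dzero (k : nat) : deg_t k := [ffun => 0%N].
Definition dadd (k : nat) (m n : deg_t k) : deg_t k := [ffun i => (m i + n i)%N].
Definition dsub (k : nat) (m n : deg_t k) : deg_t k := [ffun i => (m i - n i)%N].
Definition dle (k : nat) (m n : deg_t k) : bool := [forall i, (m i <= n i)%N].
Definition dbasis (k : nat) (i : 'I_k) : deg_t k := [ffun j => nat_of_bool (j == i)].
Definition zzero (k : nat) : zdeg_t k := [ffun => 0%R].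
Definition zsub (k : nat) (a b : zdeg_t k) : zdeg_t k := [ffun i => (a i - b i)%R].

(* A small category given by its objects (vertices), morphisms (paths), range,
   source, degree, identities and a total composition function (only meaningful
   on composable pairs). *)
Record kgraph (k : nat) := KGraph {
  kvert : finType;
  kpath : countType;
  krng : kpath -> kvert;
  ksrc : kpath -> kvert;
  kdeg : kpath -> deg_t k;
  kid : kvert -> kpath;
  kcomp : kpath -> kpath -> kpath }.

Arguments krng {k L} _ : rename.
Arguments ksrc {k L} _ : rename.
Arguments kdeg {k L} _ : rename.
Arguments kid {k L} _ : rename.
Arguments kcomp {k L} _ _ : rename.

Definition is_kgraph (k : nat) (L : kgraph k) : Prop :=
  (forall v : kvert L, krng (kid v) = v /\ ksrc (kid v) = v /\ kdeg (kid v) = dzero k) /\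
  (forall mu nu : kpath L, ksrc mu = krng nu ->
      krng (kcomp mu nu) = krng mu /\ ksrc (kcomp mu nu) = ksrc nu /\
      kdeg (kcomp mu nu) = dadd (kdeg mu) (kdeg nu)) /\
  (forall mu : kpath L, kcomp (kid (krng mu)) mu = mu /\ kcomp mu (kid (ksrc mu)) = mu) /\
  (forall mu nu eta : kpath L, ksrc mu = krng nu -> ksrc nu = krng eta ->
      kcomp (kcomp mu nu) eta = kcomp mu (kcomp nu eta)) /\
  (forall (mu : kpath L) (m n : deg_t k), kdeg mu = dadd m n ->
      exists alpha beta : kpath L,
        (kdeg alpha = m /\ kdeg beta = n /\ ksrc alpha = krng beta /\ mu = kcomp alpha beta) /\
        (forall alpha' beta' : kpath L,
           kdeg alpha' = m -> kdeg beta' = n -> ksrc alpha' = krng beta' ->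
           mu = kcomp alpha' beta' -> alpha' = alpha /\ beta' = beta)).

Definition kg_row_finite (k : nat) (L : kgraph k) : Prop :=
  forall (v : kvert L) (n : deg_t k), exists s : seq (kpath L),
    forall mu, krng mu = v -> kdeg mu = n -> mu \in s.

Definition kg_source_free (k : nat) (L : kgraph k) : Prop :=
  forall (v : kvert L) (n : deg_t k), exists mu : kpath L, krng mu = v /\ kdeg mu = n.

Definition kg_finite (k : nat) (L : kgraph k) : Prop :=
  forall n : deg_t k, exists s : seq (kpath L), forall mu, kdeg mu = n -> mu \in s.

Definition kg_strongly_connected (k : nat) (L : kgraph k) : Prop :=
  forall v w : kvert L, exists mu : kpath L, krng mu = v /\ ksrc mu = w.

Record cgroup := CGroup {
  gcar : countType;
  gmul : gcar -> gcar -> gcar;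
  gone : gcar;
  ginv : gcar -> gcar }.
Arguments gmul {G} _ _ : rename.
Arguments ginv {G} _ : rename.

Definition is_group (G : cgroup) : Prop :=
  (forall a b c : gcar G, gmul a (gmul b c) = gmul (gmul a b) c) /\
  (forall a : gcar G, gmul (gone G) a = a) /\
  (forall a : gcar G, gmul (ginv a) a = gone G).

(* Amenability of a countable discrete group, via the Folner condition:
   for every finite F and eps = 1/n there is a finite nonempty A with
   |gA (symmetric difference) A| < |A|/n for all g in F. *)
Definition folner_amenable (G : cgroup) : Prop :=
  forall (F : seq (gcar G)) (n : nat), (0 < n)%N ->
    exists A : seq (gcar G),
      uniq A /\ (0 < size A)%N /\
      forall g, g \in F ->
        (n * (count (fun a => gmul g a \notin A) A
              + count (fun b => gmul (ginv g) b \notin A) A) < size A)%N.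

Section SS.
Variables (G : cgroup) (k : nat) (L : kgraph k).
Variables (act : gcar G -> kpath L -> kpath L) (res : gcar G -> kpath L -> gcar G).

Definition vact (g : gcar G) (v : kvert L) : kvert L := krng (act g (kid v)).

Definition is_selfsimilar : Prop :=
  (forall mu, act (gone G) mu = mu) /\
  (forall g h mu, act (gmul g h) mu = act g (act h mu)) /\
  (forall g mu, kdeg (act g mu) = kdeg mu /\ krng (act g mu) = vact g (krng mu) /\
                ksrc (act g mu) = vact g (ksrc mu)) /\
  (forall g mu nu, ksrc mu = krng nu ->
      act g (kcomp mu nu) = kcomp (act g mu) (act (res g mu) nu)) /\
  (forall g v, res g (kid v) = g) /\
  (forall g mu nu, ksrc mu = krng nu -> res g (kcomp mu nu) = res (res g mu) nu) /\
  (forall mu, res (gone G) mu = gone G) /\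
  (forall g h mu, res (gmul g h) mu = gmul (res g (act h mu)) (res h mu)).

Definition pseudo_free : Prop :=
  forall g mu, act g mu = mu -> res g mu = gone G -> g = gone G.

Definition locally_faithful : Prop :=
  forall g (v : kvert L), (forall mu, krng mu = v -> act g mu = mu) -> g = gone G.

Definition finite_state : Prop :=
  forall g, exists s : seq (gcar G), forall mu, res g mu \in s.

(* infinite paths: degree-preserving functors Omega_k -> Lambda, given by their
   values x p q on pairs p <= q *)
Definition is_ipath (x : deg_t k -> deg_t k -> kpath L) : Prop :=
  (forall p q, dle p q -> kdeg (x p q) = dsub q p) /\
  (forall p, x p p = kid (krng (x p p))) /\
  (forall p q m, dle p q -> dle q m ->
      ksrc (x p q) = krng (x q m) /\ kcomp (x p q) (x q m) = x p m).

Definition iact (g : gcar G) (x : deg_t k -> deg_t k -> kpath L) :=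
  fun p q => act (res g (x (dzero k) p)) (x p q).

(* y = mu x : y(0, d mu) = mu and sigma^{d mu}(y) = x *)
Definition is_concat (mu : kpath L) (x y : deg_t k -> deg_t k -> kpath L) : Prop :=
  is_ipath y /\ y (dzero k) (kdeg mu) = mu /\
  (forall p q, dle p q -> y (dadd p (kdeg mu)) (dadd q (kdeg mu)) = x p q).

Definition cycline (mu : kpath L) (g : gcar G) (nu : kpath L) : Prop :=
  ksrc mu = vact g (ksrc nu) /\
  forall x, is_ipath x -> x (dzero k) (dzero k) = kid (ksrc nu) ->
    exists y, is_concat mu (iact g x) y /\ is_concat nu x y.

Definition in_Per (n : zdeg_t k) : Prop :=
  exists mu g nu, cycline mu g nu /\
    n = [ffun i => ((kdeg mu i)%:Z - (kdeg nu i)%:Z)%R].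
End SS.

Definition adj_count (k : nat) (L : kgraph k) (T : 'I_k -> kvert L -> kvert L -> nat) : Prop :=
  forall i v w, exists s : seq (kpath L),
    uniq s /\ size s = T i v w /\
    forall mu, (mu \in s) = [&& kdeg mu == dbasis i, krng mu == v & ksrc mu == w].

Definition adjmx (V : finType) (t : V -> V -> nat) : 'M[algC]_#|V| :=
  (\matrix_(a, b) ((t (enum_val a) (enum_val b))%:R : algC))%R.

Definition is_specrad (n : nat) (A : 'M[algC]_n) (r : algC) : Prop :=
  (exists2 l, eigenvalue A l & (`|l| = r)%R) /\
  (forall l, eigenvalue A l -> (`|l| <= r)%R).

Definition is_PF (k : nat) (L : kgraph k) (T : 'I_k -> kvert L -> kvert L -> nat)
    (rho : 'I_k -> algC) (x : kvert L -> algC) : Prop :=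
  (forall v, (0 < x v)%R) /\ (\sum_v x v = 1)%R /\
  (forall i v, (\sum_w (T i v w)%:R * x w = rho i * x v)%R).

Definition rho_pow (k : nat) (rho : 'I_k -> algC) (n : zdeg_t k) : algC :=
  (\prod_(i < k) (rho i) ^ (n i))%R.

(* Main.v *)
Require Import Defs.
From HB Require Import structures.
From mathcomp Require Import all_boot all_order all_algebra all_field.
From mathcomp Require Import zify.
From Stdlib Require Import ClassicalEpsilon.
Set Implicit Arguments. Unset Strict Implicit. Unset Printing Implicit Defensive.
Import Order.TTheory GRing.Theory Num.Theory.

Ltac gen_ff := repeat match goal with | |- context [@fun_of_fin ?a ?b ?f ?i] =>
  let x := fresh "x" in set x := @fun_of_fin a b f i; clearbody x end.
Ltac ffn := apply/ffunP => ?; rewrite ?ffunE; gen_ff; lia.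

Lemma daddC k (a b : deg_t k) : dadd a b = dadd b a. Proof. ffn. Qed.
Lemma daddA k (a b c : deg_t k) : dadd a (dadd b c) = dadd (dadd a b) c. Proof. ffn. Qed.
Lemma dadd0 k (a : deg_t k) : dadd a (dzero k) = a. Proof. ffn. Qed.
Lemma dadd0l k (a : deg_t k) : dadd (dzero k) a = a. Proof. ffn. Qed.
Lemma dsubK k (a b : deg_t k) : dsub (dadd a b) a = b. Proof. ffn. Qed.
Lemma dleP k (a b : deg_t k) : reflect (forall i, a i <= b i) (dle a b).
Proof. exact: forallP. Qed.
Lemma dle_addr k (a b : deg_t k) : dle a (dadd a b).
Proof. apply/dleP => i; rewrite ffunE; gen_ff; lia. Qed.
Lemma dle_addl k (a b : deg_t k) : dle b (dadd a b).
Proof. apply/dleP => i; rewrite ffunE; gen_ff; lia. Qed.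
Lemma dsubKC k (a b : deg_t k) : dle a b -> dadd a (dsub b a) = b.
Proof. move/dleP=> H; apply/ffunP => i; rewrite !ffunE; have := H i; gen_ff; lia. Qed.
Lemma dle_refl k (a : deg_t k) : dle a a. Proof. by apply/dleP. Qed.
Lemma dle_trans k (a b c : deg_t k) : dle a b -> dle b c -> dle a c.
Proof. move=>/dleP H1 /dleP H2; apply/dleP => i; exact: leq_trans (H1 i) (H2 i). Qed.
Lemma dle_add2r k (a b c : deg_t k) : dle a b -> dle (dadd a c) (dadd b c).
Proof. move=>/dleP H; apply/dleP => i; rewrite !ffunE; have := H i; gen_ff; lia. Qed.
Lemma dle0 k (a : deg_t k) : dle (dzero k) a. Proof. by apply/dleP => i; rewrite ffunE. Qed.
Lemma dsub_add2r k (a b c : deg_t k) : dsub (dadd b c) (dadd a c) = dsub b a.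
Proof. ffn. Qed.

Section KG.
Variables (k : nat) (L : kgraph k).
Hypothesis HL : is_kgraph L.
Implicit Types mu nu a b : kpath L.

Lemma id_rng v : krng (kid v : kpath L) = v. Proof. by case: HL => [H _]; case: (H v). Qed.
Lemma id_src v : ksrc (kid v : kpath L) = v. Proof. by case: HL => [H _]; case: (H v) => _ []. Qed.
Lemma id_deg v : kdeg (kid v : kpath L) = dzero k. Proof. by case: HL => [H _]; case: (H v) => _ []. Qed.
Lemma comp_rng mu nu : ksrc mu = krng nu -> krng (kcomp mu nu) = krng mu.
Proof. by case: HL => _ [H _] E; case: (H _ _ E). Qed.
Lemma comp_src mu nu : ksrc mu = krng nu -> ksrc (kcomp mu nu) = ksrc nu.
Proof. by case: HL => _ [H _] E; case: (H _ _ E) => _ []. Qed.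
Lemma comp_deg mu nu : ksrc mu = krng nu -> kdeg (kcomp mu nu) = dadd (kdeg mu) (kdeg nu).
Proof. by case: HL => _ [H _] E; case: (H _ _ E) => _ []. Qed.
Lemma comp_idl mu : kcomp (kid (krng mu)) mu = mu.
Proof. by case: HL => _ [_ [H _]]; case: (H mu). Qed.
Lemma comp_idr mu : kcomp mu (kid (ksrc mu)) = mu.
Proof. by case: HL => _ [_ [H _]]; case: (H mu). Qed.
Lemma comp_assoc mu nu eta : ksrc mu = krng nu -> ksrc nu = krng eta ->
  kcomp (kcomp mu nu) eta = kcomp mu (kcomp nu eta).
Proof. by case: HL => _ [_ [_ [H _]]]; apply: H. Qed.
Lemma ufp_uniq a b a' b' : ksrc a = krng b -> ksrc a' = krng b' ->
  kdeg a = kdeg a' -> kdeg b = kdeg b' -> kcomp a b = kcomp a' b' -> a = a' /\ b = b'.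
Proof.
move=> E E' Da Db C.
case: HL => _ [_ [_ [_ H]]].
have Dm : kdeg (kcomp a b) = dadd (kdeg a) (kdeg b) by rewrite comp_deg.
have [al [be [_ U]]] := H _ _ _ Dm.
have [-> ->] := U a b erefl erefl E erefl.
by have [-> ->] := U a' b' (esym Da) (esym Db) E' C.
Qed.

Lemma deg0_kid mu : kdeg mu = dzero k -> mu = kid (krng mu).
Proof.
move=> D.
have := @ufp_uniq (kid (krng mu)) mu mu (kid (ksrc mu)).
rewrite comp_idl comp_idr id_src id_rng !id_deg D => U.
by case: (U erefl erefl erefl erefl erefl).
Qed.

Definition Pf mu (m : deg_t k) (ab : kpath L * kpath L) : Prop :=
  kdeg ab.1 = m /\ ksrc ab.1 = krng ab.2 /\
       mu = kcomp ab.1 ab.2 /\ kdeg ab.2 = dsub (kdeg mu) m.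
Definition fact mu (m : deg_t k) : kpath L * kpath L :=
  epsilon (inhabits (mu, mu)) (Pf mu m).
Definition pre mu m := (fact mu m).1.
Definition post mu m := (fact mu m).2.

Lemma fact_spec mu m : dle m (kdeg mu) ->
  kdeg (pre mu m) = m /\ ksrc (pre mu m) = krng (post mu m) /\
  mu = kcomp (pre mu m) (post mu m) /\ kdeg (post mu m) = dsub (kdeg mu) m.
Proof.
move=> Hm; rewrite /pre /post; suff: Pf mu m (fact mu m) by [].
apply: epsilon_spec.
case: HL => _ [_ [_ [_ H]]].
have [al [be [[? [? [? ?]]] _]]] := H mu m (dsub (kdeg mu) m) (esym (dsubKC Hm)).
by exists (al, be).
Qed.

Lemma fact_comp a b : ksrc a = krng b ->
  pre (kcomp a b) (kdeg a) = a /\ post (kcomp a b) (kdeg a) = b.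
Proof.
move=> E.
have Dm : kdeg (kcomp a b) = dadd (kdeg a) (kdeg b) by rewrite comp_deg.
have Hle : dle (kdeg a) (kdeg (kcomp a b)) by rewrite Dm; apply: dle_addr.
have [D1 [E1 [C1 D2]]] := fact_spec Hle.
rewrite Dm dsubK in D2.
by have [-> ->] := ufp_uniq E1 E D1 D2 (esym C1).
Qed.

Lemma pre_full mu : pre mu (kdeg mu) = mu /\ post mu (kdeg mu) = kid (ksrc mu).
Proof. by have := @fact_comp mu (kid (ksrc mu)); rewrite id_rng comp_idr; apply. Qed.

Lemma fact0 mu : pre mu (dzero k) = kid (krng mu) /\ post mu (dzero k) = mu.
Proof. by have := @fact_comp (kid (krng mu)) mu; rewrite id_src comp_idl id_deg; apply. Qed.

Lemma fact_assoc mu p q : dle p q -> dle q (kdeg mu) ->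
  pre (pre mu q) p = pre mu p /\
  post mu p = kcomp (post (pre mu q) p) (post mu q) /\
  ksrc (post (pre mu q) p) = krng (post mu q).
Proof.
move=> Hpq Hq.
have [DA [EA [CA DB]]] := fact_spec Hq.
set A := pre mu q in DA EA CA *; set B := post mu q in EA CA DB *.
have HpA : dle p (kdeg A) by rewrite DA.
have [DA1 [EA1 [CA1 DA2]]] := fact_spec HpA.
set A1 := pre A p in DA1 EA1 CA1 *; set A2 := post A p in EA1 CA1 DA2 *.
have EA2 : ksrc A2 = krng B by rewrite -EA CA1 comp_src.
have E3 : ksrc A1 = krng (kcomp A2 B) by rewrite comp_rng.
have Hmu : mu = kcomp A1 (kcomp A2 B) by rewrite -comp_assoc // -CA1.
have [P1 P2] := fact_comp E3.
by rewrite -Hmu DA1 in P1 P2; rewrite P1 P2.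
Qed.

Implicit Types x y z : deg_t k -> deg_t k -> kpath L.

Lemma dsub0 (p : deg_t k) : dsub p (dzero k) = p. Proof. ffn. Qed.

Lemma ip_deg x p q : is_ipath x -> dle p q -> kdeg (x p q) = dsub q p.
Proof. by case=> H _; apply: H. Qed.
Lemma ip_comp x p q r : is_ipath x -> dle p q -> dle q r ->
  ksrc (x p q) = krng (x q r) /\ kcomp (x p q) (x q r) = x p r.
Proof. by case=> _ [_ H]; apply: H. Qed.
Lemma ip_id x p : is_ipath x -> x p p = kid (krng (x p p)).
Proof. by case=> _ [H _]. Qed.

Lemma ip_post x p q : is_ipath x -> dle p q -> x p q = post (x (dzero k) q) p.
Proof.
move=> Hx Hpq.
have [E C] := ip_comp Hx (dle0 p) Hpq.
have := fact_comp E; rewrite C (ip_deg Hx (dle0 _)) dsub0; by case.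
Qed.
Lemma ip_pre x p q : is_ipath x -> dle p q -> x (dzero k) p = pre (x (dzero k) q) p.
Proof.
move=> Hx Hpq.
have [E C] := ip_comp Hx (dle0 p) Hpq.
have := fact_comp E; rewrite C (ip_deg Hx (dle0 _)) dsub0; by case.
Qed.
Lemma ip_rng x v p q : is_ipath x -> x (dzero k) (dzero k) = kid v -> dle p q ->
  krng (x p q) = ksrc (x (dzero k) p).
Proof. by move=> Hx _ Hpq; have [E _] := ip_comp Hx (dle0 p) Hpq. Qed.
Lemma ip_rng0 x v q : is_ipath x -> x (dzero k) (dzero k) = kid v ->
  krng (x (dzero k) q) = v.
Proof.
move=> Hx H0; have [E C] := ip_comp Hx (dle_refl (dzero k)) (dle0 q).
by rewrite -C comp_rng // H0 id_rng.
Qed.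

Definition of_fam (Z : deg_t k -> kpath L) := fun p q : deg_t k => post (Z q) p.

Lemma fam_ipath Z : (forall q, kdeg (Z q) = q) ->
  (forall q q', dle q q' -> pre (Z q') q = Z q) -> is_ipath (of_fam Z).
Proof.
move=> HD HC; rewrite /of_fam; split; [|split].
- move=> p q Hpq; have Hq : dle p (kdeg (Z q)) by rewrite HD.
  have [_ [_ [_ ->]]] := fact_spec Hq; by rewrite HD.
- move=> p; have := pre_full (Z p); rewrite HD => -[_ ->]; by rewrite id_rng.
- move=> p q r Hpq Hqr.
  have Hr : dle q (kdeg (Z r)) by rewrite HD.
  have [P1 [P2 P3]] := fact_assoc Hpq Hr.
  by rewrite (HC _ _ Hqr) in P1 P2 P3; rewrite P3 P2.
Qed.

Lemma fam0 Z q : (forall q, kdeg (Z q) = q) -> of_fam Z (dzero k) q = Z q.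
Proof. by move=> _; rewrite /of_fam; case: (fact0 (Z q)). Qed.
Implicit Types lam : kpath L.
Local Notation d0 := (dzero k).

Lemma concat_y0 mu x y : is_concat mu x y -> y d0 d0 = kid (krng mu).
Proof.
case=> Hy [Hm _].
by rewrite (ip_pre Hy (dle0 (kdeg mu))) Hm; case: (fact0 mu).
Qed.

Lemma concat_ex lam x : is_ipath x -> x d0 d0 = kid (ksrc lam) -> exists y, is_concat lam x y.
Proof.
move=> Hx H0.
have Hr q : krng (x d0 q) = ksrc lam.
  exact: (@ip_rng0 x (ksrc lam) q Hx H0).
pose Z q := pre (kcomp lam (x d0 q)) q.
have Dl q : kdeg (kcomp lam (x d0 q)) = dadd (kdeg lam) q.
  by rewrite comp_deg ?Hr // (ip_deg Hx (dle0 _)) dsub0.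
have Hle q : dle q (kdeg (kcomp lam (x d0 q))) by rewrite Dl dle_addl.
have HZd q : kdeg (Z q) = q by case: (fact_spec (Hle q)).
have Hsplit q q' : dle q q' -> kcomp lam (x d0 q') = kcomp (kcomp lam (x d0 q)) (x q q').
  move=> Hqq'; have [E C] := ip_comp Hx (dle0 q) Hqq'.
  by rewrite comp_assoc ?Hr // C.
have Hsrc q q' : dle q q' -> ksrc (kcomp lam (x d0 q)) = krng (x q q').
  by move=> Hqq'; have [E C] := ip_comp Hx (dle0 q) Hqq'; rewrite comp_src ?Hr.
have HZc q q' : dle q q' -> pre (Z q') q = Z q.
  move=> Hqq'; rewrite /Z.
  have [P1 _] := fact_assoc Hqq' (Hle q').
  rewrite P1 (Hsplit _ _ Hqq').
  have H1 : dle q (dadd (kdeg lam) q) by exact: dle_addl.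
  have H2 : dle (dadd (kdeg lam) q) (kdeg (kcomp (kcomp lam (x d0 q)) (x q q'))).
    by rewrite comp_deg ?Dl ?dle_addr //; apply: Hsrc.
  have [Q1 _] := fact_assoc H1 H2.
  rewrite -Q1; have := fact_comp (Hsrc _ _ Hqq'); rewrite Dl => -[-> _] //.
exists (of_fam Z); split; [exact: fam_ipath|split].
- rewrite (fam0 _ HZd) /Z.
  have E : ksrc lam = krng (x d0 (kdeg lam)) by rewrite Hr.
  by case: (fact_comp E).
- move=> p q Hpq; rewrite /of_fam /Z.
  have Hq : dle q (dadd q (kdeg lam)) by exact: dle_addr.
  rewrite (Hsplit _ _ Hq).
  have Hs := Hsrc _ _ Hq.
  have := fact_comp Hs; rewrite Dl daddC => -[-> _].
  rewrite (Hsplit _ _ Hpq).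
  have := fact_comp (Hsrc _ _ Hpq); rewrite Dl daddC => -[_ ->] //.
Qed.

Lemma concat_0 mu x y q : is_concat mu x y -> y d0 (dadd q (kdeg mu)) = kcomp mu (x d0 q).
Proof.
case=> Hy [Hm Hs].
have [E C] := ip_comp Hy (dle0 (kdeg mu)) (dle_addl q (kdeg mu)).
by rewrite -C Hm; have := Hs d0 q (dle0 q); rewrite dadd0l => ->.
Qed.

Lemma concat_uniq mu x y y' : is_concat mu x y -> is_concat mu x y' ->
  forall p q, dle p q -> y p q = y' p q.
Proof.
move=> H1 H2 p q Hpq.
have Hy := H1.1; have Hy' := H2.1.
have Hq : dle q (dadd q (kdeg mu)) by exact: dle_addr.
rewrite (ip_post Hy Hpq) (ip_post Hy' Hpq) (ip_pre Hy Hq) (ip_pre Hy' Hq).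
by rewrite !(concat_0 _ H1) (concat_0 _ H2).
Qed.

Lemma ip_shift y m : is_ipath y -> is_ipath (fun p q => y (dadd p m) (dadd q m)).
Proof.
move=> Hy; split; [|split].
- by move=> p q Hpq; rewrite (ip_deg Hy (dle_add2r _ Hpq)) dsub_add2r.
- by move=> p; rewrite {1}(ip_id _ Hy).
- by move=> p q r Hpq Hqr; apply: ip_comp Hy (dle_add2r _ Hpq) (dle_add2r _ Hqr).
Qed.

Lemma ipath_eqi x x' : is_ipath x -> (forall p q, dle p q -> x' p q = x p q) -> is_ipath x'.
Proof.
move=> Hx E; split; [|split].
- by move=> p q Hpq; rewrite E // (ip_deg Hx Hpq).
- by move=> p; rewrite E ?dle_refl // {1}(ip_id _ Hx).
- move=> p q r Hpq Hqr; rewrite !E //; try exact: dle_trans Hpq Hqr.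
  exact: ip_comp Hx Hpq Hqr.
Qed.

Lemma concat_eqi mu x x' y y' : is_concat mu x y ->
  (forall p q, dle p q -> x' p q = x p q) -> (forall p q, dle p q -> y' p q = y p q) ->
  is_concat mu x' y'.
Proof.
case=> Hy [Hm Hs] Ex Ey; split; [exact: ipath_eqi Hy Ey|split].
- by rewrite Ey ?dle0.
- by move=> p q Hpq; rewrite Ey ?dle_add2r // Hs // Ex.
Qed.

Definition dconst (j : nat) : deg_t k := [ffun => j].

Lemma ipath_ex (HSF : kg_source_free L) v : exists x, is_ipath x /\ x d0 d0 = kid v.
Proof.
pose c w := epsilon (inhabits (kid w)) (fun mu : kpath L => krng mu = w /\ kdeg mu = dconst 1).
have Hc w : krng (c w) = w /\ kdeg (c w) = dconst 1.
  by apply: (epsilon_spec (inhabits (kid w)) (fun mu : kpath L => krng mu = w /\ kdeg mu = dconst 1)); apply: HSF.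
pose fix Lam j := if j is j'.+1 then kcomp (Lam j') (c (ksrc (Lam j'))) else kid v.
have HLam j : krng (Lam j) = v /\ kdeg (Lam j) = dconst j.
  elim: j => [|j [IH1 IH2]] /=; first by rewrite id_rng id_deg; split => //; ffn.
  have E : ksrc (Lam j) = krng (c (ksrc (Lam j))) by case: (Hc (ksrc (Lam j))).
  rewrite comp_rng // comp_deg // IH2; split => //.
  case: (Hc (ksrc (Lam j))) => _ ->; apply/ffunP => i; rewrite !ffunE; lia.
have Hdc j j' : j <= j' -> dle (dconst j) (dconst j').
  by move=> H; apply/dleP => i; rewrite !ffunE.
have HLc j j' : j <= j' -> pre (Lam j') (dconst j) = Lam j.
  elim: j' => [|j' IH] Hj.
    have -> : j = 0 by lia.
    by rewrite -(HLam 0).2; case: (pre_full (Lam 0)).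
  case: (ltnP j j'.+1) => Hj'.
  - have Hjj : j <= j' by lia.
    have Hle : dle (dconst j') (kdeg (Lam j'.+1)) by rewrite (HLam _).2; apply: Hdc.
    have [P1 _] := fact_assoc (Hdc _ _ Hjj) Hle.
    rewrite -P1 /=.
    have E : ksrc (Lam j') = krng (c (ksrc (Lam j'))) by case: (Hc (ksrc (Lam j'))).
    have := fact_comp E; rewrite (HLam j').2 => -[-> _]; exact: IH.
  - have -> : j = j'.+1 by lia.
    by rewrite -(HLam j'.+1).2; case: (pre_full (Lam j'.+1)).
pose J (q : deg_t k) := (\sum_(i < k) q i)%N.
have HJ q : dle q (dconst (J q)).
  by apply/dleP => i; rewrite ffunE /J (bigD1 i) //= leq_addr.
have HJm q q' : dle q q' -> J q <= J q'.
  by move/dleP => H; apply: leq_sum => i _; apply: H.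
pose Z q := pre (Lam (J q)) q.
have HZd q : kdeg (Z q) = q.
  have Hle : dle q (kdeg (Lam (J q))) by rewrite (HLam _).2.
  by case: (fact_spec Hle).
have HZc q q' : dle q q' -> pre (Z q') q = Z q.
  move=> Hqq'; rewrite /Z.
  have Hle' : dle q' (kdeg (Lam (J q'))) by rewrite (HLam _).2.
  have [P1 _] := fact_assoc Hqq' Hle'; rewrite P1.
  have Hle2 : dle (dconst (J q)) (kdeg (Lam (J q'))) by rewrite (HLam _).2; apply/Hdc/HJm.
  have [P2 _] := fact_assoc (HJ q) Hle2.
  by rewrite -P2 HLc //; apply: HJm.
exists (of_fam Z); split; first exact: fam_ipath.
rewrite (fam0 _ HZd).
have := deg0_kid (HZd d0); move->; congr kid.
rewrite /Z.
have Hle : dle d0 (kdeg (Lam (J d0))) by exact: dle0.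
have [_ [E [C _]]] := fact_spec Hle.
by rewrite -(HLam (J d0)).1 {2}C comp_rng.
Qed.

Lemma ext_ipath (HSF : kg_source_free L) lam :
  exists x, is_ipath x /\ x d0 d0 = kid (krng lam) /\ x d0 (kdeg lam) = lam.
Proof.
have [x' [Hx' H0]] := ipath_ex HSF (ksrc lam).
have [y Hy] := concat_ex Hx' H0.
exists y; split; first exact: Hy.1.
by split; [exact: concat_y0 Hy | exact: Hy.2.1].
Qed.
End KG.

Section Grp.
Variable G : cgroup.
Hypothesis HG : is_group G.
Local Notation gm := (@gmul G).
Local Notation gi := (@ginv G).
Local Notation e := (gone G).
Implicit Types g h : gcar G.

Lemma gA a b c : gm a (gm b c) = gm (gm a b) c. Proof. by case: HG. Qed.
Lemma g1l a : gm e a = a. Proof. by case: HG => _ []. Qed.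
Lemma gVl a : gm (gi a) a = e. Proof. by case: HG => _ []. Qed.
Lemma gVr a : gm a (gi a) = e.
Proof.
rewrite -[gm a (gi a)]g1l -{1}(gVl (gi a)) -gA [gm (gi a) (gm a (gi a))]gA gVl g1l.
by rewrite gVl.
Qed.
Lemma g1r a : gm a e = a. Proof. by rewrite -(gVl a) gA gVr g1l. Qed.
Lemma ginv_uniq a b : gm a b = e -> a = gi b.
Proof. by move=> H; rewrite -(g1r a) -(gVr b) gA H g1l. Qed.
End Grp.

Section SS.
Variables (k : nat) (L : kgraph k).
Hypothesis HL : is_kgraph L.
Variable G : cgroup.
Hypothesis HG : is_group G.
Variables (act : gcar G -> kpath L -> kpath L) (res : gcar G -> kpath L -> gcar G).
Hypothesis HSS : is_selfsimilar act res.
Local Notation gm := (@gmul G).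
Local Notation gi := (@ginv G).
Local Notation e := (gone G).
Local Notation va := (vact act).
Local Notation d0 := (dzero k).
Implicit Types g h : gcar G.
Implicit Types mu nu lam al : kpath L.
Implicit Types x y z : deg_t k -> deg_t k -> kpath L.

Lemma act1 mu : act e mu = mu. Proof. by case: HSS. Qed.
Lemma actM g h mu : act (gm g h) mu = act g (act h mu). Proof. by case: HSS => _ []. Qed.
Lemma act_deg g mu : kdeg (act g mu) = kdeg mu. Proof. by case: HSS => _ [_ [H _]]; case: (H g mu). Qed.
Lemma act_rng g mu : krng (act g mu) = va g (krng mu). Proof. by case: HSS => _ [_ [H _]]; case: (H g mu) => _ []. Qed.
Lemma act_src g mu : ksrc (act g mu) = va g (ksrc mu). Proof. by case: HSS => _ [_ [H _]]; case: (H g mu) => _ []. Qed.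
Lemma act_comp g mu nu : ksrc mu = krng nu -> act g (kcomp mu nu) = kcomp (act g mu) (act (res g mu) nu).
Proof. by case: HSS => _ [_ [_ [H _]]]; apply: H. Qed.
Lemma res_id g v : res g (kid v) = g. Proof. by case: HSS => _ [_ [_ [_ [H _]]]]. Qed.
Lemma res_comp g mu nu : ksrc mu = krng nu -> res g (kcomp mu nu) = res (res g mu) nu.
Proof. by case: HSS => _ [_ [_ [_ [_ [H _]]]]]; apply: H. Qed.
Lemma res1 mu : res e mu = e. Proof. by case: HSS => _ [_ [_ [_ [_ [_ [H _]]]]]]. Qed.
Lemma resM g h mu : res (gm g h) mu = gm (res g (act h mu)) (res h mu).
Proof. by case: HSS => _ [_ [_ [_ [_ [_ [_ H]]]]]]. Qed.

Lemma act_kid g v : act g (kid v) = kid (va g v).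
Proof. by rewrite (deg0_kid HL (_ : kdeg (act g (kid v)) = d0)) ?act_rng ?(id_rng HL) // act_deg (id_deg HL). Qed.
Lemma va1 v : va e v = v. Proof. by rewrite /vact act1 (id_rng HL). Qed.
Lemma vaM g h v : va (gm g h) v = va g (va h v).
Proof. by rewrite /vact actM act_rng. Qed.
Lemma vaK g v : va (gi g) (va g v) = v. Proof. by rewrite -vaM gVl // va1. Qed.
Lemma vaKV g v : va g (va (gi g) v) = v. Proof. by rewrite -vaM gVr // va1. Qed.
Lemma va_inj g u w : va g u = va g w -> u = w.
Proof. by move=> H; rewrite -(vaK g u) H vaK. Qed.
Lemma actK g mu : act (gi g) (act g mu) = mu. Proof. by rewrite -actM gVl // act1. Qed.
Lemma actKV g mu : act g (act (gi g) mu) = mu. Proof. by rewrite -actM gVr // act1. Qed.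

Lemma iact_mul g h x v : x d0 d0 = kid v -> forall p q, iact act res (gm g h) x p q = iact act res g (iact act res h x) p q.
Proof. by move=> H0 p q; rewrite /iact H0 res_id resM actM. Qed.
Lemma iact_one x p q : iact act res e x p q = x p q.
Proof. by rewrite /iact res1 act1. Qed.
Lemma iact_inv g x v : x d0 d0 = kid v -> forall p q, iact act res g (iact act res (gi g) x) p q = x p q.
Proof. by move=> H0 p q; rewrite -(iact_mul g (gi g) H0) gVr // iact_one. Qed.
Lemma iact00 g x v : x d0 d0 = kid v -> iact act res g x d0 d0 = kid (va g v).
Proof. by move=> H0; rewrite /iact H0 res_id act_kid. Qed.

Definition goodH h v := forall lam beta, krng lam = v -> ksrc lam = krng beta ->
  va (res h lam) (ksrc beta) = va (res h (kcomp lam beta)) (ksrc beta).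

Lemma good_iact h v x : goodH h v -> is_ipath x -> x d0 d0 = kid v -> is_ipath (iact act res h x).
Proof.
move=> Hg Hx H0; rewrite /iact; split; [|split].
- by move=> p q Hpq; rewrite act_deg (ip_deg Hx Hpq).
- by move=> p; apply: (deg0_kid HL); rewrite act_deg (ip_deg Hx (dle_refl p)); ffn.
- move=> p q r Hpq Hqr.
  have [E1 C1] := ip_comp Hx (dle0 p) Hpq.
  have [E2 C2] := ip_comp Hx Hpq Hqr.
  have Hr : krng (x d0 p) = v by exact: (ip_rng0 HL p Hx H0).
  rewrite -C1 (res_comp _ E1); split.
  + rewrite act_src act_rng -E2 -(res_comp _ E1); exact: Hg.
  + by rewrite -act_comp // C2.
Qed.

Lemma H_of_good g v lam : goodH g v -> krng lam = v -> va g (ksrc lam) = va (res g lam) (ksrc lam).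
Proof.
move=> Hg Hr; have := Hg (kid v) lam; rewrite (id_rng HL) (id_src HL) Hr res_id -Hr (comp_idl HL) => -> //.
Qed.

Lemma goodH_inv g u v : goodH g v -> u = va g v -> goodH (gi g) u.
Proof.
move=> Hg Hu.
pose h := gi g.
have Hgh : gm g h = e by apply: gVr.
have S1 lam' : krng lam' = u -> va h (ksrc lam') = va (res h lam') (ksrc lam').
  move=> Hr; set lam := act h lam'.
  have Hlr : krng lam = v by rewrite /lam act_rng Hr Hu vaK.
  have HH := H_of_good Hg Hlr.
  have Hkh : gm (res g lam) (res h lam') = e by rewrite -resM Hgh res1.
  have Hs : ksrc lam = va h (ksrc lam') by rewrite /lam act_src.
  rewrite Hs -vaM Hgh va1 in HH.
  apply: (@va_inj (res g lam)); by rewrite -HH -vaM Hkh va1.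
move=> lam' beta' Hr Ec.
set k0 := res h lam'.
set lam := act h lam'; set beta := act k0 beta'.
have Elb : ksrc lam = krng beta by rewrite /lam /beta act_src act_rng -Ec S1.
have Hlr : krng lam = v by rewrite /lam act_rng Hr Hu vaK.
have HH := Hg lam beta Hlr Elb.
have E2 : kcomp lam beta = act h (kcomp lam' beta') by rewrite act_comp.
have Hk1 : gm (res g lam) k0 = e by rewrite -resM Hgh res1.
have Hk2 : gm (res g (kcomp lam beta)) (res h (kcomp lam' beta')) = e by rewrite E2 -resM Hgh res1.
have Hsb : ksrc beta = va k0 (ksrc beta') by rewrite /beta act_src.
rewrite Hsb -vaM Hk1 va1 (ginv_uniq HG Hk2) in HH.
by rewrite [in RHS]HH vaKV.
Qed.

Hypothesis HSF : kg_source_free L.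
Local Notation cyc := (cycline act res).
Local Notation ia := (iact act res).

Lemma cyc_good mu g nu : cyc mu g nu -> forall x, is_ipath x -> x d0 d0 = kid (ksrc nu) ->
  is_ipath (ia g x).
Proof.
move=> [_ Hc] x Hx H0; have [y [[Hy [_ Hs]] _]] := Hc x Hx H0.
by apply: (ipath_eqi (ip_shift (kdeg mu) Hy)) => p q Hpq; rewrite Hs.
Qed.

Lemma cyc_H mu g nu : cyc mu g nu -> goodH g (ksrc nu).
Proof.
move=> Hc lam beta Hr Ec.
set gam := kcomp lam beta.
have [x [Hx [H0 Hq]]] := ext_ipath HL HSF gam.
have Hrg : krng gam = ksrc nu by rewrite /gam (comp_rng HL).
rewrite Hrg in H0.
have Hz := cyc_good Hc Hx H0.
have Dg : kdeg gam = dadd (kdeg lam) (kdeg beta) by rewrite /gam (comp_deg HL).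
have Hlq : dle (kdeg lam) (kdeg gam) by rewrite Dg dle_addr.
have X1 : x d0 (kdeg lam) = lam.
  by rewrite (ip_pre HL Hx Hlq) Hq; case: (fact_comp HL Ec).
have X2 : x (kdeg lam) (kdeg gam) = beta.
  by rewrite (ip_post HL Hx Hlq) Hq; case: (fact_comp HL Ec).
have [E _] := ip_comp Hz Hlq (dle_refl (kdeg gam)).
rewrite /iact X1 X2 Hq act_src act_rng in E.
rewrite E (ip_rng Hx H0 (dle_refl _)) Hq /gam (comp_src HL) //.
Qed.

Lemma cyc_rr mu g nu : cyc mu g nu -> krng mu = krng nu.
Proof.
move=> [_ Hc]; have [x [Hx H0]] := ipath_ex HL HSF (ksrc nu).
have [y [H1 H2]] := Hc x Hx H0.
have := concat_y0 HL H1; rewrite (concat_y0 HL H2) => /(congr1 krng).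
by rewrite !(id_rng HL).
Qed.

Lemma cyc0 v : cyc (kid v) e (kid v).
Proof.
split; first by rewrite (id_src HL) va1.
move=> x Hx H0; rewrite (id_src HL) in H0; exists x.
split; (split; [exact: Hx | split; [by rewrite (id_deg HL) | move=> p q Hpq]]);
  by rewrite (id_deg HL) !dadd0 ?iact_one.
Qed.

Lemma cyc_inv mu g nu : cyc mu g nu -> cyc nu (gi g) mu.
Proof.
move=> Hc; have [Hsm Hc'] := Hc.
have Hgood := goodH_inv (cyc_H Hc) Hsm.
split; first by rewrite Hsm vaK.
move=> z Hz H0.
have Hw := good_iact Hgood Hz H0.
have Hw0 := iact00 (gi g) H0; rewrite Hsm vaK in Hw0.
have [y [H1 H2]] := Hc' _ Hw Hw0.
exists y; split => //.
apply: (concat_eqi H1) => // p q _; by rewrite (iact_inv g H0).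
Qed.

Lemma cyc_comp mu g nu h rho : cyc mu g nu -> cyc nu h rho -> cyc mu (gm g h) rho.
Proof.
move=> H1 H2; have [S1 C1] := H1; have [S2 C2] := H2.
split; first by rewrite vaM -S2.
move=> x Hx H0.
have [y2 [Y2a Y2b]] := C2 x Hx H0.
have Hw := cyc_good H2 Hx H0.
have Hw0 := iact00 h H0; rewrite -S2 in Hw0.
have [y1 [Y1a Y1b]] := C1 _ Hw Hw0.
exists y2; split => //.
apply: (concat_eqi Y1a).
- by move=> p q _; rewrite (iact_mul g h H0).
- by move=> p q Hpq; rewrite (concat_uniq HL Y1b Y2a).
Qed.

Lemma dadd_shift (p a b : deg_t k) : dadd p (dadd a b) = dadd (dadd p b) a.
Proof. ffn. Qed.

Lemma cyc_pre mu g nu al : cyc mu g nu -> ksrc al = krng nu -> cyc (kcomp al mu) g (kcomp al nu).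
Proof.
move=> Hc Ea; have [Sm Cc] := Hc.
have Ea' : ksrc al = krng mu by rewrite (cyc_rr Hc).
split; first by rewrite !(comp_src HL) //.
rewrite (comp_src HL) // => x Hx H0.
have [y [Ym Yn]] := Cc x Hx H0.
have Hy0 : y d0 d0 = kid (ksrc al) by rewrite (concat_y0 HL Yn) Ea.
have [y' Hy'] := concat_ex HL Ym.1 Hy0.
have Hy'i := Hy'.1.
exists y'.
have key m (xx : deg_t k -> deg_t k -> kpath L) : ksrc al = krng m -> is_concat m xx y ->
    is_concat (kcomp al m) xx y'.
  move=> Em Hm; split => //; rewrite (comp_deg HL) //; split.
  - by rewrite daddC (concat_0 _ Hy') (Hm.2.1).
  - move=> p q Hpq; rewrite !dadd_shift.
    have [_ [_ Hs']] := Hy'; rewrite Hs'; last by apply: dle_add2r.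
    by have [_ [_ ->]] := Hm.
by split; apply: key.
Qed.

Lemma cyc_ext mu g nu lam : cyc mu g nu -> krng lam = ksrc nu ->
  cyc (kcomp mu (act g lam)) (res g lam) (kcomp nu lam).
Proof.
move=> Hc Er; have [Sm Cc] := Hc.
have HH := H_of_good (cyc_H Hc) Er.
have Em : ksrc mu = krng (act g lam) by rewrite act_rng Er.
have En : ksrc nu = krng lam by [].
split; first by rewrite !(comp_src HL) // act_src HH.
rewrite (comp_src HL) // => x Hx H0.
have [y' Hy'] := concat_ex HL Hx H0.
have Hy'0 : y' d0 d0 = kid (ksrc nu) by rewrite (concat_y0 HL Hy') Er.
have [y [Ym Yn]] := Cc y' Hy'.1 Hy'0.
exists y; split; split; try exact: Ym.1.
- split.
  + rewrite (comp_deg HL) // act_deg daddC (concat_0 _ Ym).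
    by rewrite /iact Hy'0 res_id Hy'.2.1.
  + move=> p q Hpq; rewrite (comp_deg HL) // act_deg !dadd_shift.
    have [_ [_ ->]] := Ym; last by apply: dle_add2r.
    rewrite /iact (concat_0 _ Hy').
    have [_ [_ ->]] := Hy' => //.
    by rewrite (res_comp _ (_ : ksrc lam = krng (x d0 p))) // (ip_rng0 HL p Hx H0).
- split.
  + by rewrite (comp_deg HL) // daddC (concat_0 _ Yn) Hy'.2.1.
  + move=> p q Hpq; rewrite (comp_deg HL) // !dadd_shift.
    have [_ [_ ->]] := Yn; last by apply: dle_add2r.
    by have [_ [_ ->]] := Hy'.
Qed.

Hypothesis HSC : kg_strongly_connected L.

Lemma Per0 (v : kvert L) : in_Per act res (zzero k).
Proof.
exists (kid v), (gone G), (kid v); split; first exact: cyc0.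
by apply/ffunP => i; rewrite !ffunE subrr.
Qed.

Lemma Per_sub a b : in_Per act res a -> in_Per act res b -> in_Per act res (zsub a b).
Proof.
move=> [mu1 [g1 [nu1 [T1 ->]]]] [mu2 [g2 [nu2 [T2 ->]]]].
have T2' := cyc_inv T2.
have [al [Ar As]] := HSC (ksrc nu1) (krng nu2).
set lam := kcomp al nu2.
have Elam : krng lam = ksrc nu1 by rewrite /lam (comp_rng HL).
have T1' := cyc_ext T1 Elam.
set beta := kcomp nu1 al.
have Eb : ksrc beta = krng mu2.
  by rewrite /beta (comp_src HL) // As (cyc_rr T2).
have T2'' := cyc_pre T2' Eb.
have Eq : kcomp nu1 lam = kcomp beta nu2 by rewrite /lam /beta (comp_assoc HL).
rewrite Eq in T1'.
have T := cyc_comp T1' T2''.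
exists (kcomp mu1 (act g1 lam)), (gmul (res g1 lam) (ginv g2)), (kcomp beta mu2); split => //.
have [S1 _] := T1.
have Em : ksrc mu1 = krng (act g1 lam) by rewrite act_rng Elam.
have Eb2 : ksrc beta = krng mu2 by [].
rewrite (comp_deg HL Em) (comp_deg HL Eb2) act_deg /lam /beta (comp_deg HL As) (comp_deg HL (esym Ar)).
apply/ffunP => i; rewrite !ffunE.
move: (kdeg mu1 i) (kdeg nu1 i) (kdeg mu2 i) (kdeg nu2 i) (kdeg al i) => m1 n1 m2 n2 a1.
rewrite !PoszD; lia.
Qed.

Hypothesis HF : kg_finite L.
Definition Eall (a : deg_t k) : seq (kpath L) :=
  epsilon (inhabits [::]) (fun s => forall mu, kdeg mu = a -> mu \in s).
Lemma Eall_spec a mu : kdeg mu = a -> mu \in Eall a.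
Proof.
have := epsilon_spec (inhabits [::]) (fun s => forall mu, kdeg mu = a -> mu \in s) (HF a).
by apply.
Qed.
Definition E (v : kvert L) (a : deg_t k) :=
  undup [seq mu <- Eall a | (krng mu == v) && (kdeg mu == a)].
Lemma mem_E v a mu : (mu \in E v a) = (krng mu == v) && (kdeg mu == a).
Proof.
rewrite mem_undup mem_filter; case Hc: ((krng mu == v) && (kdeg mu == a)) => //=.
by move/andP: Hc => [_ /eqP Hd]; apply: Eall_spec.
Qed.
Lemma uniq_E v a : uniq (E v a). Proof. exact: undup_uniq. Qed.

Lemma big_part (I J : eqType) (s : seq I) (t : seq J) (f : I -> J) (F : I -> algC) :
  uniq t -> (forall i, i \in s -> f i \in t) ->
  (\sum_(i <- s) F i = \sum_(j <- t) \sum_(i <- s | f i == j) F i)%R.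
Proof.
move=> Ut Hf; rewrite (exchange_big_dep predT) //=; apply: eq_big_seq => i Hi.
rewrite -big_filter (@eq_filter _ _ (pred1 (f i))) ?filter_pred1_uniq ?big_seq1 ?Hf //.
all: try by move=> j /=; rewrite eq_sym.
Qed.

Variables (T : 'I_k -> kvert L -> kvert L -> nat) (rho : 'I_k -> algC) (xv : kvert L -> algC).
Hypotheses (HT : adj_count T) (HPF : is_PF T rho xv).

Definition S v a := (\sum_(mu <- E v a) xv (ksrc mu))%R.

Lemma S_basis i v : S v (dbasis i) = (rho i * xv v)%R.
Proof.
have [_ [_ Heig]] := HPF; rewrite -Heig /S.
transitivity (\sum_(mu <- E v (dbasis i)) \sum_(w : kvert L) ((ksrc mu == w)%:R * xv w))%R.
  apply: eq_bigr => mu _; rewrite (bigD1 (ksrc mu)) //= eqxx mul1r big1 ?addr0 //.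
  by move=> w Hw; rewrite eq_sym (negbTE Hw) mul0r.
rewrite exchange_big; apply: eq_bigr => w _; rewrite -big_distrl /=; congr (_ * _)%R.
rewrite -natr_sum; congr (_%:R)%R.
have -> : (\sum_(mu <- E v (dbasis i)) (ksrc mu == w))%N = count (fun mu => ksrc mu == w) (E v (dbasis i)).
  elim: (E v (dbasis i)) => [|a l IH]; by rewrite ?big_nil ?big_cons //= IH.
have [s [Us [Ss Ms]]] := HT i v w.
rewrite -Ss -size_filter; apply: perm_size; apply: uniq_perm; rewrite ?filter_uniq ?uniq_E //.
move=> mu; rewrite mem_filter mem_E Ms.
by do ! case: eqP.
Qed.

Lemma S_add v a b : S v (dadd a b) = (\sum_(lam <- E v a) S (ksrc lam) b)%R.
Proof.
rewrite /S (@big_part _ _ _ (E v a) (fun mu => pre mu a)); rewrite ?uniq_E //; last first.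
  move=> mu; rewrite !mem_E => /andP [/eqP Hr /eqP Hd].
  have Hle : dle a (kdeg mu) by rewrite Hd dle_addr.
  have [D1 [E1 [C1 _]]] := fact_spec HL Hle.
  by rewrite D1 eqxx andbT -Hr {2}C1 (comp_rng HL).
apply: eq_big_seq => lam; rewrite mem_E => /andP [/eqP Hr /eqP Hd].
rewrite -big_filter (perm_big [seq kcomp lam nu | nu <- E (ksrc lam) b]).
  rewrite big_map; apply: eq_big_seq => nu; rewrite mem_E => /andP [/eqP Hnr _].
  by rewrite (comp_src HL).
apply: uniq_perm; rewrite ?filter_uniq ?uniq_E //.
  rewrite map_inj_in_uniq ?uniq_E // => nu nu' Hn Hn' Heq.
  move: Hn Hn'; rewrite !mem_E => /andP [/eqP Hn _] /andP [/eqP Hn' _].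
  have [_ P1] := fact_comp HL (esym Hn); have [_ P2] := fact_comp HL (esym Hn').
  by rewrite -P1 -P2 Heq.
move=> mu; rewrite mem_filter mem_E; apply/idP/idP.
- move=> /andP [/eqP Hp /andP [/eqP Hmr /eqP Hmd]].
  have Hle : dle a (kdeg mu) by rewrite Hmd dle_addr.
  have [D1 [E1 [C1 D2]]] := fact_spec HL Hle.
  apply/mapP; exists (post mu a); last by rewrite -Hp -C1.
  by rewrite mem_E -E1 Hp eqxx D2 Hmd dsubK eqxx.
- move=> /mapP [nu]; rewrite mem_E => /andP [/eqP Hnr /eqP Hnd] ->.
  have [P1 _] := fact_comp HL (esym Hnr).
  by rewrite -Hd P1 eqxx (comp_rng HL) // Hr (comp_deg HL) // Hd Hnd !eqxx.
Qed.

Lemma S0 v : S v d0 = xv v.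
Proof.
rewrite /S (perm_big [:: kid v]) ?big_seq1 ?(id_src HL) //.
apply: uniq_perm; rewrite ?uniq_E // => mu; rewrite mem_E inE.
apply/idP/eqP => [/andP [/eqP Hr /eqP Hd] | ->].
- by rewrite (deg0_kid HL Hd) Hr.
- by rewrite (id_rng HL) (id_deg HL) !eqxx.
Qed.

Lemma sum_dadd (a b : deg_t k) : (\sum_(j < k) dadd a b j = \sum_(j < k) a j + \sum_(j < k) b j)%N.
Proof. by rewrite -big_split; apply: eq_bigr => j _; rewrite ffunE. Qed.
Lemma sum_basis (i : 'I_k) : (\sum_(j < k) dbasis i j = 1)%N.
Proof.
rewrite (bigD1 i) //= ffunE eqxx big1 // => j Hj; by rewrite ffunE (negbTE Hj).
Qed.
Lemma prod_dadd (a b : deg_t k) :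
  (\prod_(j < k) rho j ^+ dadd a b j = \prod_(j < k) rho j ^+ a j * \prod_(j < k) rho j ^+ b j)%R.
Proof. by rewrite -big_split; apply: eq_bigr => j _; rewrite ffunE exprD. Qed.
Lemma prod_basis (i : 'I_k) : (\prod_(j < k) rho j ^+ dbasis i j = rho i)%R.
Proof.
rewrite (bigD1 i) //= ffunE eqxx expr1 big1 ?mulr1 // => j Hj; by rewrite ffunE (negbTE Hj) expr0.
Qed.

Lemma S_pow a v : S v a = (\prod_(j < k) rho j ^+ a j * xv v)%R.
Proof.
have Hz b w : b = d0 -> S w b = (\prod_(j < k) rho j ^+ b j * xv w)%R.
  move=> ->; rewrite S0 big1 ?mul1r // => j _; by rewrite ffunE expr0.
move: (leqnn (\sum_(j < k) a j)); move: {2}(\sum_(j < k) a j)%N => n.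
elim: n a v => [|n IH] a v Ha.
  apply: Hz; apply/ffunP => i; rewrite ffunE.
  have : (a i <= \sum_(j < k) a j)%N by rewrite (bigD1 i) //= leq_addr.
  move: Ha; gen_ff; lia.
case: (pickP (fun i => 0 < a i)%N) => [i Hi | H0]; last first.
  apply: Hz; apply/ffunP => i; rewrite ffunE; have := H0 i; gen_ff; simpl; lia.
set a' := dsub a (dbasis i).
have Ea : a = dadd a' (dbasis i).
  apply/ffunP => j; rewrite !ffunE; case: (j =P i) => [->|_] /=; move: Hi; gen_ff; lia.
have Ha' : (\sum_(j < k) a' j <= n)%N.
  by move: Ha; rewrite Ea sum_dadd sum_basis addn1.
rewrite Ea S_add.
under eq_big_seq => lam _ do rewrite S_basis.
rewrite -big_distrr /= -/(S v a') IH // prod_dadd prod_basis.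
by rewrite mulrA [(_ * rho i)%R]mulrC.
Qed.

Lemma cyc_fin mu g nu x : cyc mu g nu -> is_ipath x -> x d0 d0 = kid (ksrc nu) ->
  kcomp nu (x d0 (kdeg mu)) = kcomp mu (act g (x d0 (kdeg nu))).
Proof.
move=> [_ Hc] Hx H0; have [y [Ym Yn]] := Hc x Hx H0.
rewrite -(concat_0 _ Yn) daddC (concat_0 _ Ym).
by rewrite /iact H0 res_id.
Qed.

Lemma S_cyc mu g nu : cyc mu g nu -> S (ksrc nu) (kdeg mu) = S (ksrc mu) (kdeg nu).
Proof.
move=> Hc; have [Sm _] := Hc.
set v := ksrc nu; set u := ksrc mu.
pose f al := post (kcomp nu al) (kdeg mu).
have key al : al \in E v (kdeg mu) -> f al \in E u (kdeg nu) /\ kcomp nu al = kcomp mu (f al).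
  rewrite mem_E => /andP [/eqP Hr /eqP Hd].
  have [x [Hx [H0 Hq]]] := ext_ipath HL HSF al.
  rewrite Hr in H0; rewrite Hd in Hq.
  have Hf := cyc_fin Hc Hx H0; rewrite Hq in Hf.
  set beta := act g (x d0 (kdeg nu)) in Hf.
  have Eb : ksrc mu = krng beta by rewrite /beta act_rng (ip_rng0 HL _ Hx H0).
  have [_ P2] := fact_comp HL Eb.
  have -> : f al = beta by rewrite /f Hf.
  split => //; rewrite mem_E -Eb eqxx /beta act_deg (ip_deg Hx (dle0 _)) dsub0 eqxx //.
rewrite /S [in RHS](perm_big [seq f al | al <- E v (kdeg mu)]).
  rewrite big_map; apply: eq_big_seq => al Hal.
  have [Hm Hk] := key al Hal; move: Hal; rewrite mem_E => /andP [/eqP Hr _].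
  move: Hm; rewrite mem_E => /andP [/eqP Hfr _].
  have Eb : ksrc mu = krng (f al) by rewrite Hfr.
  by rewrite -(comp_src HL Eb) -Hk (comp_src HL).
apply: uniq_perm; rewrite ?uniq_E //.
  rewrite map_inj_in_uniq ?uniq_E // => a1 a2 H1 H2 Heq.
  have [_ K1] := key a1 H1; have [_ K2] := key a2 H2.
  move: H1 H2; rewrite !mem_E => /andP [/eqP R1 _] /andP [/eqP R2 _].
  have [_ Q1] := fact_comp HL (esym R1 : ksrc nu = krng a1).
  have [_ Q2] := fact_comp HL (esym R2 : ksrc nu = krng a2).
  by rewrite -Q1 -Q2 K1 K2 Heq.
move=> beta; apply/idP/idP; last first.
  by move=> /mapP [al Hal ->]; case: (key al Hal).
rewrite mem_E => /andP [/eqP Hbr /eqP Hbd].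
set gam := act (gi g) beta.
have Hgr : krng gam = v by rewrite /gam act_rng Hbr /u Sm vaK.
have Hgd : kdeg gam = kdeg nu by rewrite /gam act_deg.
have [x [Hx [H0 Hq]]] := ext_ipath HL HSF gam.
rewrite Hgr in H0; rewrite Hgd in Hq.
have Hf := cyc_fin Hc Hx H0; rewrite Hq /gam actKV in Hf.
apply/mapP; exists (x d0 (kdeg mu)).
  by rewrite mem_E (ip_rng0 HL _ Hx H0) eqxx (ip_deg Hx (dle0 _)) dsub0 eqxx.
have Eb : ksrc mu = krng beta by rewrite Hbr.
by rewrite /f Hf; case: (fact_comp HL Eb).
Qed.

Lemma sum_pos (s : seq (kpath L)) (F : kpath L -> algC) a :
  a \in s -> (forall b, 0 < F b)%R -> (0 < \sum_(b <- s) F b)%R.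
Proof.
move=> Ha HF0; elim: s Ha => [//|c s IH]; rewrite inE big_cons => /orP [/eqP <- | Hs].
- by apply: ltr_wpDr => //; apply: sumr_ge0 => b _; apply: ltW.
- by apply: ltr_wpDl; [apply: ltW | apply: IH].
Qed.

Lemma xv_pos v : (0 < xv v)%R. Proof. by case: HPF. Qed.

Lemma rho_neq0 (v : kvert L) i : (rho i != 0)%R.
Proof.
have [mu0 [Hr Hd]] := HSF v (dbasis i).
have Hin : mu0 \in E v (dbasis i) by rewrite mem_E Hr Hd !eqxx.
have : (0 < S v (dbasis i))%R by apply: (sum_pos Hin) => b; apply: xv_pos.
rewrite S_basis; apply: contraTneq => ->; by rewrite mul0r ltxx.
Qed.

Hypothesis Hinv : forall g v, xv (va g v) = xv v.

Lemma Per_rho (v0 : kvert L) n : in_Per act res n -> rho_pow rho n = 1%R.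
Proof.
move=> [mu [g [nu [Hc ->]]]]; have [Sm _] := Hc.
have HS := S_cyc Hc; rewrite !S_pow Sm Hinv in HS.
have Hx0 : (xv (ksrc nu) != 0)%R by rewrite gt_eqF ?xv_pos.
have HP := mulIf Hx0 HS.
rewrite /rho_pow.
transitivity (\prod_(i < k) (rho i ^+ kdeg mu i * (rho i ^+ kdeg nu i)^-1))%R.
  apply: eq_bigr => i _; rewrite ffunE expfzDr ?(rho_neq0 v0) // -invr_expz //.
rewrite big_split /= prodfV HP mulfV //.
by apply/prodf_neq0 => i _; rewrite expf_neq0 // (rho_neq0 v0).
Qed.
End SS.

Theorem corollary6p13 (k : nat) (G : cgroup) (L : kgraph k)
  (act : gcar G -> kpath L -> kpath L) (res : gcar G -> kpath L -> gcar G)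
  (T : 'I_k -> kvert L -> kvert L -> nat) (rho : 'I_k -> algC) (x : kvert L -> algC) :
  (0 < k)%N ->
  is_group G -> folner_amenable G ->
  is_kgraph L -> kg_row_finite L -> kg_source_free L ->
  kg_finite L -> kg_strongly_connected L ->
  is_selfsimilar act res -> pseudo_free act res -> locally_faithful act ->
  finite_state res ->
  adj_count T ->
  (forall i, is_specrad (adjmx (T i)) (rho i)) ->
  is_PF T rho x ->
  (forall g v, x (vact act g v) = x v) ->
  in_Per act res (zzero k) /\
  (forall a b, in_Per act res a -> in_Per act res b -> in_Per act res (zsub a b)) /\
  (forall n, in_Per act res n -> rho_pow rho n = 1%R).
Proof.
move=> _ HG _ HL _ HSF HF HSC HSS _ _ _ HT _ HPF Hinv.
case: (pickP (fun _ : kvert L => true)) => [v0 _ | Hn]; last first.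
  have [_ [Hs _]] := HPF; move: Hs; rewrite big_pred0 // => /eqP.
  by rewrite eq_sym GRing.oner_eq0.
split; first exact: (Per0 HL HSS v0).
split; first by move=> a b; apply: (Per_sub HL HG HSS HSF HSC).
by move=> n; apply: (Per_rho HL HG HSS HSF HF HT HPF Hinv v0).
Qed.
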